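(* Consider the two-individual system under (h1), (h2), (h3), and suppose $M>0$. Let $x_*=-\frac{1-\sqrt{1-(\tanh M)^2}}{\tanh M}$. Then there exists an integer $m\ge1$ such that either individual 2 acts at some time in $(0,(m+1)T]$, or individual 2 has not acted on $[0,mT]$ and $x_2(mT)>x_*$.
   Context: Two-individual model ($n=2$): parameters $\sigma_A,\sigma_S\ge 0$, $\sigma_C>0$, $\mu_S\in[0,1]$, $\mu_C>0$, $r>0$, $\tau\in(0,1)$, $\alpha_1,\alpha_2\in(-1,1)$. States $x_i\in(-1,1)$, $y_i\in[0,1]$, with $\gamma_1=y_2$, $\gamma_2=y_1$. Between action events: $\dot x_i=[\sigma_A\alpha_i+\sigma_S(\gamma_i-\mu_S)]\,\sigma_C(\gamma_i+\mu_C)(1-x_i)(1+x_i)$, $\dot y_i=-ry_i$. Individual $i$ ''acts'' at time $t$ when $x_i(t)$ reaches $\tau$; immediately afterwards $x_i$ is reset to $0$ and $y_i$ to $1$, and evolution resumes. Hypotheses: (h1) $\sigma_A\alpha_1-\sigma_S\mu_S>0$; (h2) $\sigma_A\alpha_2-\sigma_S\mu_S\le0$; (h3) $x_1(0)=y_1(0)=y_2(0)=0$ and $x_2(0)\in(-1,\tau)$. Constants: $A_1=(\sigma_A\alpha_1-\sigma_S\mu_S)\sigma_C\mu_C$, $T=\tanh^{-1}(\tau)/A_1$, $A=(\sigma_A\alpha_2-\sigma_S\mu_S)\sigma_C\mu_C$, $B=-\frac1r\big[(\sigma_A\alpha_2-\sigma_S\mu_S)\sigma_C+\sigma_S\sigma_C\mu_C\big]$,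 $C=-\frac{\sigma_S\sigma_C}{2r}$, $M=AT+Be^{-rT}+Ce^{-2rT}-B-C$. *)

(* Defs.v *)
From Stdlib Require Import Reals.
From Coquelicot Require Import Coquelicot.
Open Scope R_scope.

Definition atanh (u : R) : R := ln ((1 + u) / (1 - u)) / 2.

Definition has_right_deriv (f : R -> R) (t l : R) : Prop :=
  filterlim (fun h => (f (t + h) - f t) / h) (at_right 0) (locally l).

Definition acts (tau : R) (x : R -> R) (t : R) : Prop :=
  0 < t /\ filterlim x (at_left t) (locally tau).

Definition xfield (sA sS sC muS muC alpha g x : R) : R :=
  (sA * alpha + sS * (g - muS)) * (sC * (g + muC)) * ((1 - x) * (1 + x)).

(* Hybrid trajectory of one individual i with state (x,y), partner's y = g
   (gamma_i = y_j).  Values at action times are the post-reset values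
   (trajectories are right-continuous), so the ODE holds in the sense of
   right derivatives at every t >= 0; at every t > 0 at which the
   individual does not act, x and y are left-continuous; at an action
   time x is reset to 0 and y to 1. *)
Definition indiv_traj (sA sS sC muS muC r tau alpha : R)
    (x y g : R -> R) : Prop :=
  (forall t, 0 <= t ->
      has_right_deriv x t (xfield sA sS sC muS muC alpha (g t) (x t)) /\
      has_right_deriv y t (- r * y t)) /\
  (forall t, 0 < t ->
      (acts tau x t -> x t = 0 /\ y t = 1) /\
      (~ acts tau x t ->
          filterlim x (at_left t) (locally (x t)) /\
          filterlim y (at_left t) (locally (y t)))).

Definition two_indiv_traj (sA sS sC muS muC r tau alpha1 alpha2 : R)
    (x1 y1 x2 y2 : R -> R) : Prop :=
  indiv_traj sA sS sC muS muC r tau alpha1 x1 y1 y2 /\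
  indiv_traj sA sS sC muS muC r tau alpha2 x2 y2 y1.

(* Main.v *)
Require Import Defs.
From Stdlib Require Import Reals Lra Lia Classical.
From Coquelicot Require Import Coquelicot.
Open Scope R_scope.

Definition RD (f : R -> R) (t l : R) : Prop :=
  filterdiff f (at_right t) (fun h : R => scal h l).

Lemma at_right_lim t : is_filter_lim (at_right t) t.
Proof. intros P HP. unfold at_right, within. apply filter_imp with (2:=HP). auto. Qed.

Lemma at_right_lim_eq t x : is_filter_lim (at_right t) x -> x = t.
Proof.
  intros H.
  destruct (Req_dec x t) as [e|ne]; auto.
  exfalso.
  assert (Hd : 0 < Rabs (x - t) / 2).
  { apply Rdiv_lt_0_compat; [apply Rabs_pos_lt; lra| lra]. }
  set (e := mkposreal _ Hd).
  assert (H1 : at_right t (ball x e)) by (apply H; apply locally_ball).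
  assert (H2 : at_right t (ball t e)).
  { unfold at_right, within. apply filter_imp with (2:=locally_ball t e). auto. }
  destruct (filter_ex _ (filter_and _ _ H1 H2)) as [y [Hy1 Hy2]].
  revert Hy1 Hy2. unfold ball; simpl; unfold AbsRing_ball, abs, minus, plus, opp; simpl.
  intros. assert (Rabs (x - t) <= Rabs (y + - x) + Rabs (y + - t)).
  { replace (x - t) with (-(y + - x) + (y + - t)) by ring.
    eapply Rle_trans; [apply Rabs_triang|]. rewrite Rabs_Ropp; lra. }
  simpl in *. lra.
Qed.

Lemma ballE (x y e : R) : ball x e y <-> Rabs (y - x) < e.
Proof. unfold ball; simpl; unfold AbsRing_ball, abs, minus, plus, opp; simpl. tauto. Qed.

Lemma RD_of_hrd f t l : has_right_deriv f t l -> RD f t l.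
Proof.
  intros H. split; [exact (@is_linear_scal_l R_AbsRing R_NormedModule l)|].
  intros x Hx. rewrite (at_right_lim_eq _ _ Hx). intros eps.
  destruct (H (ball l eps) (locally_ball l eps)) as [d Hd].
  exists d. intros y Hy Hty.
  assert (Hh : ball 0 d (y - t)).
  { apply ballE. apply ballE in Hy. replace (y - t - 0) with (y - t) by ring. exact Hy. }
  specialize (Hd (y - t) Hh ltac:(lra)).
  apply ballE in Hd.
  rewrite (Rplus_minus t y) in Hd.
  change (Rabs (f y - f t - (y - t) * l) <= eps * Rabs (y - t)).
  replace (f y - f t - (y - t) * l) with ((y - t) * ((f y - f t) / (y - t) - l)) by (field; intro; idtac; match goal with H : _ |- _ => idtac end; simpl in *; lra).
  rewrite Rabs_mult. rewrite Rmult_comm. apply Rmult_le_compat_r; [apply Rabs_pos| ]. pose proof (proj1 (ballE _ _ _) Hd) as Hd2. simpl in Hd2. lra.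
Qed.

Lemma RD_bound f t l : RD f t l -> forall eps, 0 < eps ->
  exists d, 0 < d /\ forall y, t < y < t + d -> Rabs (f y - f t - (y - t) * l) <= eps * (y - t).
Proof.
  intros [_ H] eps Heps.
  specialize (H t (at_right_lim t) (mkposreal _ Heps)).
  destruct H as [d Hd]. exists d. split; [apply cond_pos|].
  intros y Hy. assert (B : ball t d y) by (apply ballE; rewrite Rabs_right; lra).
  specialize (Hd y B (proj1 Hy)). simpl in Hd.
  change (Rabs (f y - f t - (y - t) * l) <= eps * Rabs (y - t)) in Hd.
  rewrite (Rabs_right (y - t)) in Hd by lra. exact Hd.
Qed.

Lemma RD_cont f t l : RD f t l -> filterlim f (at_right t) (locally (f t)).
Proof.
  intros H. intros P [e He].
  assert (Hq : 0 < e / (Rabs l + 1)).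
  { apply Rdiv_lt_0_compat; [apply cond_pos| pose proof (Rabs_pos l); lra]. }
  destruct (RD_bound f t l H 1 ltac:(lra)) as [d [Hd Hb]].
  exists (mkposreal _ (Rmin_pos _ _ Hd Hq)). intros y Hy Hty. simpl.
  apply He. apply ballE. pose proof (proj1 (ballE _ _ _) Hy) as Hy2. clear Hy. rename Hy2 into Hy. simpl in Hy.
  rewrite Rabs_right in Hy by (simpl in Hty; lra).
  assert (y - t < d) by (eapply Rlt_le_trans; [exact Hy| apply Rmin_l]).
  assert (y - t < e / (Rabs l + 1)) by (eapply Rlt_le_trans; [exact Hy| apply Rmin_r]).
  specialize (Hb y ltac:(lra)).
  replace (f y - f t) with ((f y - f t - (y - t) * l) + (y - t) * l) by ring.
  eapply Rle_lt_trans; [apply Rabs_triang|]. rewrite Rabs_mult, (Rabs_right (y-t)) by lra.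
  apply (Rmult_lt_compat_r (Rabs l + 1)) in H1; [|pose proof (Rabs_pos l); lra].
  unfold Rdiv in H1. rewrite Rmult_assoc, Rinv_l in H1 by (pose proof (Rabs_pos l); lra).
  pose proof (Rabs_pos l). nra.
Qed.

Lemma locally_pair_prod (x y : R) (P : R * R -> Prop) :
  locally (x, y) P -> filter_prod (locally x) (locally y) P.
Proof.
  intros [e He]. exists (ball x e) (ball y e); try apply locally_ball.
  intros u v Hu Hv. apply He. split; assumption.
Qed.

Lemma L_pair {T} (F : (T -> Prop) -> Prop) {FF : Filter F} (f g : T -> R) a b :
  filterlim f F (locally a) -> filterlim g F (locally b) ->
  filterlim (fun s => (f s, g s)) F (locally (a, b)).
Proof.
  intros Hf Hg P HP. apply locally_pair_prod in HP.
  exact (filterlim_pair f g Hf Hg P HP).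
Qed.

Lemma L_plus {T} (F : (T -> Prop) -> Prop) {FF : Filter F} (f g : T -> R) a b :
  filterlim f F (locally a) -> filterlim g F (locally b) ->
  filterlim (fun s => f s + g s) F (locally (a + b)).
Proof. intros Hf Hg. exact (filterlim_comp_2 f g (fun u v => plus u v) Hf Hg (filterlim_plus a b)). Qed.

Lemma L_mult {T} (F : (T -> Prop) -> Prop) {FF : Filter F} (f g : T -> R) a b :
  filterlim f F (locally a) -> filterlim g F (locally b) ->
  filterlim (fun s => f s * g s) F (locally (a * b)).
Proof. intros Hf Hg. exact (filterlim_comp_2 f g (fun u v => mult u v) Hf Hg (filterlim_mult a b)). Qed.

Lemma L_comp {T} (F : (T -> Prop) -> Prop) (f : T -> R) (g : R -> R) a :
  filterlim f F (locally a) -> continuous g a ->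
  filterlim (fun s => g (f s)) F (locally (g a)).
Proof. intros Hf Hg. eapply filterlim_comp; [exact Hf| exact Hg]. Qed.

Lemma L_const {T} (F : (T -> Prop) -> Prop) {FF : Filter F} (c : R) :
  filterlim (fun _ => c) F (locally c).
Proof. apply filterlim_const. Qed.

Lemma L_opp {T} (F : (T -> Prop) -> Prop) {FF : Filter F} (f : T -> R) a :
  filterlim f F (locally a) -> filterlim (fun s => - f s) F (locally (- a)).
Proof.
  intros Hf. apply (L_comp F f (fun x => - x) a Hf). apply (ex_derive_continuous (K:=R_AbsRing) (V:=R_NormedModule)). auto_derive; auto.
Qed.

Lemma L_inv {T} (F : (T -> Prop) -> Prop) (f : T -> R) a :
  a <> 0 -> filterlim f F (locally a) -> filterlim (fun s => / f s) F (locally (/ a)).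
Proof.
  intros Ha Hf. apply (L_comp F f (fun x => / x) a Hf). apply (ex_derive_continuous (K:=R_AbsRing) (V:=R_NormedModule)). auto_derive; auto.
Qed.

Lemma L_ext {T} (F : (T -> Prop) -> Prop) {FF : Filter F} (f g : T -> R) a b :
  (forall s, f s = g s) -> a = b -> filterlim f F (locally a) -> filterlim g F (locally b).
Proof. intros E ab H. subst. apply filterlim_ext with f; auto. Qed.

Lemma RD_of_derive f t l : is_derive f t l -> RD f t l.
Proof.
  intros H. unfold RD.
  apply (filterdiff_locally (F := at_right t) f t); [apply at_right_lim| exact H].
Qed.

Lemma RD_contin f t l : RD f t l -> filterlim f (at_right t) (locally (f t)).
Proof.
  intros H. apply (filterdiff_continuous_aux (K:=R_AbsRing) (U:=R_NormedModule) (V:=R_NormedModule) (F := at_right t)).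
  - exists (fun h : R => scal h l). exact H.
  - apply at_right_lim.
Qed.

Lemma RD_ext f g t l1 l2 : (forall s, f s = g s) -> l1 = l2 -> RD f t l1 -> RD g t l2.
Proof.
  intros E e H. subst. unfold RD in *.
  apply (filterdiff_ext (F:=at_right t)) with f; auto.
Qed.

Lemma RD_plus f g t lf lg : RD f t lf -> RD g t lg -> RD (fun s => f s + g s) t (lf + lg).
Proof.
  intros Hf Hg. unfold RD in *.
  pose proof (filterdiff_plus_fct (F:=at_right t) f g _ _ Hf Hg) as H.
  apply (filterdiff_ext_lin (F:=at_right t)) with (1 := H).
  intros y. change (y * lf + y * lg = y * (lf + lg)). ring.
Qed.

Lemma RD_const c t : RD (fun _ => c) t 0.
Proof.
  unfold RD. apply (filterdiff_ext_lin (F:=at_right t)) with (fun _ => zero).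
  - apply filterdiff_const.
  - intros y. change (0 = y * 0). ring.
Qed.

Lemma RD_mult f g t lf lg : RD f t lf -> RD g t lg -> RD (fun s => f s * g s) t (lf * g t + f t * lg).
Proof.
  intros Hf Hg.
  pose proof (RD_contin _ _ _ Hf) as Cf. pose proof (RD_contin _ _ _ Hg) as Cg.
  unfold RD in *.
  assert (Hl : is_filter_lim (filtermap (fun s => (f s, g s)) (at_right t)) (f t, g t)).
  { intros P HP. apply (L_pair (at_right t) f g _ _ Cf Cg P HP). }
  pose proof (filterdiff_mult (K:=R_AbsRing) (F := filtermap (fun s => (f s, g s)) (at_right t)) (f t, g t) Hl
     ltac:(intros; apply Rmult_comm)) as Hm.
  pose proof (filterdiff_comp_2 (F := at_right t) f g (fun u v => mult u v) _ _
       (fun u v => plus (mult u (g t)) (mult (f t) v)) Hf Hg Hm) as H.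
  apply (filterdiff_ext_lin (F:=at_right t)) with (1 := H).
  intros y. change (y * lf * g t + f t * (y * lg) = y * (lf * g t + f t * lg)). ring.
Qed.

Lemma RD_comp f (g : R -> R) t lf lg : RD f t lf -> is_derive g (f t) lg ->
  RD (fun s => g (f s)) t (lf * lg).
Proof.
  intros Hf Hg.
  pose proof (RD_contin _ _ _ Hf) as Cf.
  unfold RD in *.
  assert (Hl : is_filter_lim (filtermap f (at_right t)) (f t)).
  { intros P HP. apply (Cf P HP). }
  assert (Hg' : filterdiff g (filtermap f (at_right t)) (fun y => scal y lg)).
  { apply (filterdiff_locally (F := filtermap f (at_right t)) g (f t)); auto. }
  pose proof (filterdiff_comp (F := at_right t) f g _ _ Hf Hg') as H.
  apply (filterdiff_ext_lin (F:=at_right t)) with (1 := H).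
  intros y. change (y * lf * lg = y * (lf * lg)). ring.
Qed.

Lemma at_left_gt a s : a < s -> at_left s (fun u => a < u).
Proof.
  intros H. unfold at_left, within.
  exists (mkposreal _ (proj2 (Rlt_0_minus _ _) H)). intros y Hy _.
  pose proof (proj1 (ballE _ _ _) Hy) as Hy2. simpl in Hy2.
  apply Rabs_def2 in Hy2. lra.
Qed.

Lemma at_left_ex a s (P : R -> Prop) : a < s -> at_left s P -> exists u, a < u < s /\ P u.
Proof.
  intros H HP.
  assert (H2 : at_left s (fun u => u < s)).
  { unfold at_left, within. apply filter_forall. auto. }
  destruct (filter_ex _ (filter_and _ _ (filter_and _ _ (at_left_gt a s H) H2) HP)) as [u [[h1 h2] h3]].
  exists u; auto.
Qed.

Lemma lim_left_le f s L a K : a < s -> filterlim f (at_left s) (locally L) ->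
  (forall u, a <= u < s -> f u <= K) -> L <= K.
Proof.
  intros Has Hf Hb. destruct (Rle_or_lt L K) as [h|h]; auto. exfalso.
  assert (Hd : 0 < L - K) by lra.
  assert (HP := Hf (ball L (mkposreal _ Hd)) (locally_ball _ _)).
  destruct (at_left_ex a s _ Has HP) as [u [Hu Hbu]].
  pose proof (proj1 (ballE _ _ _) Hbu) as Hb2. simpl in Hb2.
  apply Rabs_def2 in Hb2. specialize (Hb u ltac:(lra)). lra.
Qed.

Lemma mono_eps (f l : R -> R) (a c d eps : R) :
  a < c -> 0 < eps -> eps * (c - a) < d ->
  (forall t, a <= t < c -> RD f t (l t) /\ l t <= 0) ->
  (forall s, a < s <= c -> (forall t, a <= t < s -> f t <= f a + d) -> filterlim f (at_left s) (locally (f s))) ->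
  forall t, a <= t <= c -> f t <= f a + eps * (t - a).
Proof.
  intros Hac He Hed HD HL.
  set (S := fun t => a <= t <= c /\ forall u, a <= u <= t -> f u <= f a + eps * (u - a)).
  assert (Sa : S a).
  { split; [lra|]. intros u Hu. replace u with a by lra. lra. }
  assert (Bd : bound S). { exists c. intros x [Hx _]. lra. }
  destruct (completeness S Bd (ex_intro _ a Sa)) as [s [Hub Hlub]].
  assert (Has : a <= s) by (apply Hub; exact Sa).
  assert (Hsc : s <= c) by (apply Hlub; intros x [Hx _]; lra).
  assert (C1 : forall u, a <= u < s -> f u <= f a + eps * (u - a)).
  { intros u Hu. destruct (classic (exists t, S t /\ u < t)) as [[t [[_ Ht] Hut]]|Hn].
    - apply Ht. lra.
    - exfalso. assert (s <= u); [|lra]. apply Hlub. intros x Sx.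
      destruct (Rle_or_lt x u) as [h|h]; auto. exfalso. apply Hn. exists x. auto. }
  assert (C2 : f s <= f a + eps * (s - a)).
  { destruct (Req_dec s a) as [e|ne].
    - subst. lra.
    - assert (Has' : a < s) by lra.
      assert (Hl := HL s (conj Has' Hsc) ltac:(intros t Ht; specialize (C1 t Ht); nra)).
      apply (lim_left_le f s (f s) a (f a + eps * (s - a)) Has' Hl).
      intros u Hu. specialize (C1 u Hu). nra. }
  assert (Ss : S s).
  { split; [lra|]. intros u Hu. destruct (Req_dec u s) as [e|ne]; [subst; auto| apply C1; lra]. }
  assert (Es : s = c).
  { destruct (Req_dec s c) as [e|ne]; auto. exfalso.
    destruct (HD s ltac:(lra)) as [Hd Hl0].
    destruct (RD_bound f s (l s) Hd eps He) as [r [Hr Hb]].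
    set (y := s + Rmin r (c - s) / 2).
    assert (Hy1 : s < y). { unfold y. assert (0 < Rmin r (c - s)) by (apply Rmin_pos; lra). lra. }
    assert (Hy2 : y < s + r). { unfold y. pose proof (Rmin_l r (c - s)). assert (0 < Rmin r (c - s)) by (apply Rmin_pos; lra). lra. }
    assert (Hy3 : y <= c). { unfold y. pose proof (Rmin_r r (c - s)). lra. }
    assert (Sy : S y).
    { split; [lra|]. intros u Hu. destruct (Rle_or_lt u s) as [h|h].
      - apply (proj2 Ss). lra.
      - specialize (Hb u ltac:(lra)). pose proof (Rle_abs (f u - f s - (u - s) * l s)). specialize (C1 s). nra. }
    specialize (Hub y Sy). lra. }
  intros t Ht. subst s. apply (proj2 Ss). lra.
Qed.

Lemma mono (f l : R -> R) (a c d : R) :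
  a < c -> 0 < d ->
  (forall t, a <= t < c -> RD f t (l t) /\ l t <= 0) ->
  (forall s, a < s <= c -> (forall t, a <= t < s -> f t <= f a + d) -> filterlim f (at_left s) (locally (f s))) ->
  forall t, a <= t <= c -> f t <= f a.
Proof.
  intros Hac Hd HD HL t Ht.
  destruct (Rle_or_lt (f t) (f a)) as [h|h]; auto. exfalso.
  set (eps := Rmin (d / (2 * (c - a))) ((f t - f a) / (2 * (c - a)))).
  assert (P1 : 0 < d / (2 * (c - a))) by (apply Rdiv_lt_0_compat; lra).
  assert (P2 : 0 < (f t - f a) / (2 * (c - a))) by (apply Rdiv_lt_0_compat; lra).
  assert (He : 0 < eps) by (apply Rmin_pos; auto).
  assert (E1 : eps * (c - a) < d).
  { apply Rle_lt_trans with (d / (2 * (c - a)) * (c - a)).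
    - apply Rmult_le_compat_r; [lra| apply Rmin_l].
    - replace (d / (2 * (c - a)) * (c - a)) with (d / 2) by (field; lra). lra. }
  assert (E2 : eps * (t - a) < f t - f a).
  { apply Rle_lt_trans with ((f t - f a) / (2 * (c - a)) * (c - a)).
    - apply Rle_trans with (eps * (c - a)); [apply Rmult_le_compat_l; lra|].
      apply Rmult_le_compat_r; [lra| apply Rmin_r].
    - replace ((f t - f a) / (2 * (c - a)) * (c - a)) with ((f t - f a) / 2) by (field; lra). lra. }
  pose proof (mono_eps f l a c d eps Hac He E1 HD HL t Ht). lra.
Qed.

Lemma th_eq z : tanh z = (exp (2 * z) - 1) / (exp (2 * z) + 1).
Proof.
  unfold tanh, sinh, cosh.
  replace (2 * z) with (z + z) by ring. rewrite exp_plus, exp_Ropp.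
  pose proof (exp_pos z). field. split; nra.
Qed.

Lemma th_bound z : -1 < tanh z < 1.
Proof. rewrite th_eq. pose proof (exp_pos (2 * z)). split; apply Rmult_lt_reg_r with (exp (2*z) + 1); try lra;
  unfold Rdiv; rewrite Rmult_assoc, Rinv_l; lra. Qed.

Lemma th_deriv z : is_derive tanh z (1 - tanh z ^ 2).
Proof.
  apply is_derive_ext with (fun z => (exp (2 * z) - 1) / (exp (2 * z) + 1)).
  { intros; rewrite th_eq; auto. }
  rewrite th_eq. pose proof (exp_pos (2 * z)).
  auto_derive; [lra|]. field. lra.
Qed.

Lemma th_mono x y : x < y -> tanh x < tanh y.
Proof.
  intros H. rewrite !th_eq.
  assert (exp (2 * x) < exp (2 * y)) by (apply exp_increasing; lra).
  pose proof (exp_pos (2 * x)). pose proof (exp_pos (2 * y)).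
  apply Rminus_gt_0_lt.
  replace ((exp (2 * y) - 1) / (exp (2 * y) + 1) - (exp (2 * x) - 1) / (exp (2 * x) + 1))
    with (2 * (exp (2 * y) - exp (2 * x)) / ((exp (2 * y) + 1) * (exp (2 * x) + 1))) by (field; lra).
  apply Rdiv_lt_0_compat; nra.
Qed.

Lemma th_0 : tanh 0 = 0.
Proof. rewrite th_eq. rewrite Rmult_0_r, exp_0. field. Qed.

Lemma th_nonneg z : 0 <= z -> 0 <= tanh z.
Proof. intros H. destruct (Req_dec z 0). subst; rewrite th_0; lra. rewrite <- th_0. left; apply th_mono; lra. Qed.

Lemma th_atanh x : -1 < x < 1 -> tanh (atanh x) = x.
Proof.
  intros H. rewrite th_eq. unfold atanh.
  replace (2 * (ln ((1 + x) / (1 - x)) / 2)) with (ln ((1 + x) / (1 - x))) by field.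
  rewrite exp_ln by (apply Rdiv_lt_0_compat; lra). field. lra.
Qed.

Lemma atanh_th z : atanh (tanh z) = z.
Proof.
  unfold atanh. rewrite th_eq. pose proof (exp_pos (2 * z)).
  replace ((1 + (exp (2 * z) - 1) / (exp (2 * z) + 1)) / (1 - (exp (2 * z) - 1) / (exp (2 * z) + 1)))
    with (exp (2 * z)) by (field; lra).
  rewrite ln_exp. field.
Qed.

Lemma atanh_pos x : 0 < x < 1 -> 0 < atanh x.
Proof.
  intros H. unfold atanh. apply Rdiv_lt_0_compat; [|lra].
  rewrite <- ln_1. apply ln_increasing; [lra|].
  apply Rmult_lt_reg_r with (1 - x); [lra|]. unfold Rdiv. rewrite Rmult_assoc, Rinv_l; lra.
Qed.

Lemma cont_left (g : R -> R) s : (forall z, ex_derive g z) -> filterlim g (at_left s) (locally (g s)).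
Proof.
  intros H. apply (filterlim_filter_le_1 (F := locally s)).
  - apply filter_le_within.
  - apply (ex_derive_continuous (K:=R_AbsRing) (V:=R_NormedModule)). apply H.
Qed.

Lemma YU (y : R -> R) (r a b v0 : R) :
  a < b -> 0 <= r ->
  (forall t, a <= t < b -> RD y t (- r * y t)) ->
  (forall s, a < s < b -> filterlim y (at_left s) (locally (y s))) ->
  y a = v0 ->
  forall t, a <= t < b -> y t = v0 * exp (- r * (t - a)).
Proof.
  intros Hab Hr HD HL Ha t Ht.
  set (v := fun s => v0 * exp (- r * (s - a))).
  set (g := fun s => y s + - v s).
  set (f := fun s => g s * g s).
  assert (Dv : forall s, is_derive (fun s => - v s) s (r * v s)).
  { intros s. unfold v. auto_derive; [auto|]. unfold Rminus; ring. }
  assert (Dg : forall s, a <= s < b -> RD g s (- r * y s + r * v s)).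
  { intros s Hs. apply RD_plus; auto. apply RD_of_derive; auto. }
  assert (Df : forall s, a <= s < b -> RD f s (-2 * r * (g s * g s)) /\ -2 * r * (g s * g s) <= 0).
  { intros s Hs. split.
    - eapply RD_ext; [intros; reflexivity| |apply RD_mult; apply Dg; auto]. unfold g. ring.
    - pose proof (Rle_0_sqr (g s)). unfold Rsqr in *. nra. }
  assert (Hf0 : f a = 0). { unfold f, g, v. rewrite Ha. replace (a - a) with 0 by ring.
    rewrite Rmult_0_r, exp_0. ring. }
  destruct (Req_dec t a) as [e|ne].
  - subst t. rewrite Ha. unfold v. replace (a - a) with 0 by ring. rewrite Rmult_0_r, exp_0. ring.
  - assert (Hm := mono f (fun s => -2 * r * (g s * g s)) a t 1 ltac:(lra) ltac:(lra)
            ltac:(intros s Hs; apply Df; lra)).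
    assert (Hft : f t <= f a).
    { apply Hm; [|lra]. intros s Hs _.
      unfold f, g. apply (L_mult (at_left s)); apply (L_plus (at_left s));
      [apply HL; lra | apply (L_opp (at_left s)); apply cont_left; intros; unfold v; auto_derive; auto
      |apply HL; lra | apply (L_opp (at_left s)); apply cont_left; intros; unfold v; auto_derive; auto]. }
    rewrite Hf0 in Hft. unfold f in Hft. pose proof (Rle_0_sqr (g t)). unfold Rsqr in *.
    assert (g t = 0) by nra. unfold g in *. fold (v t). lra.
Qed.

Lemma RD_opp f t l : RD f t l -> RD (fun s => - f s) t (- l).
Proof.
  intros H. eapply RD_ext; [intros; reflexivity| |apply (RD_comp f (fun z => - z) t l (-1) H)].
  ring. auto_derive; auto.
Qed.

Lemma RD_inv f t l : RD f t l -> f t <> 0 -> RD (fun s => / f s) t (l * (- / (f t * f t))).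
Proof.
  intros H Hn. apply (RD_comp f (fun z => / z) t l). exact H.
  auto_derive; auto. field. auto.
Qed.

Lemma Dpos x w : -1 < w < 1 -> 0 < (1 + - (x * w)) * (1 + - (x * w)) + (x + - w) * (x + - w).
Proof.
  intros H. destruct (Req_dec x w) as [e|ne].
  - subst. replace (w + - w) with 0 by ring. assert (0 < 1 + - (w * w)) by nra. nra.
  - assert (0 < (x + - w) * (x + - w)).
    { assert (x + - w <> 0) by lra. pose proof (Rsqr_pos_lt _ H0). unfold Rsqr in H1. lra. }
    pose proof (Rle_0_sqr (1 + - (x * w))). unfold Rsqr in H1. lra.
Qed.

Lemma XU (x k W : R -> R) (a b tau : R) :
  a < b -> -1 < tau < 1 ->
  (forall t, is_derive W t (k t)) ->
  (forall t, a <= t < b -> RD x t (k t * ((1 - x t) * (1 + x t)))) ->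
  (forall s, a < s < b -> filterlim x (at_left s) (locally (x s)) \/ filterlim x (at_left s) (locally tau)) ->
  (forall c, a < c < b -> exists g, 0 < g /\ forall s, a < s <= c ->
      filterlim x (at_left s) (locally tau) -> tanh (W s) <= tau - g) ->
  x a = tanh (W a) ->
  forall t, a <= t < b -> x t = tanh (W t).
Proof.
  intros Hab Htau DW Dx HL Hgap Ha t Ht.
  set (w := fun s => tanh (W s)).
  assert (Dw : forall s, is_derive w s (k s * (1 - w s ^ 2))).
  { intros s. unfold w. apply (is_derive_comp tanh W s). apply th_deriv. apply DW. }
  assert (Cw : forall s, filterlim w (at_left s) (locally (w s))).
  { intros s. apply cont_left. intros z. exists (k z * (1 - w z ^ 2)). apply Dw. }
  assert (wb : forall s, -1 < w s < 1) by (intros; apply th_bound).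
  set (N := fun s => x s + - w s).
  set (P := fun s => 1 + - (x s * w s)).
  set (D := fun s => P s * P s + N s * N s).
  set (F := fun s => N s * N s * / D s).
  assert (DposS : forall s, 0 < D s) by (intros; apply Dpos; auto).
  assert (DF : forall s, a <= s < b -> RD F s 0).
  { intros s Hs.
    assert (HN : RD N s (k s * ((1 - x s) * (1 + x s)) + - (k s * (1 - w s ^ 2)))).
    { apply RD_plus; auto. apply RD_opp. apply RD_of_derive. auto. }
    assert (HP : RD P s (0 + - ((k s * ((1 - x s) * (1 + x s))) * w s + x s * (k s * (1 - w s ^ 2))))).
    { apply RD_plus. apply RD_const. apply RD_opp. apply RD_mult; auto. apply RD_of_derive; auto. }
    assert (HD := RD_plus _ _ _ _ _ (RD_mult _ _ _ _ _ HP HP) (RD_mult _ _ _ _ _ HN HN)).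
    assert (HF := RD_mult _ _ _ _ _ (RD_mult _ _ _ _ _ HN HN) (RD_inv _ _ _ HD ltac:(specialize (DposS s); unfold D in DposS; lra))).
    eapply RD_ext; [intros; reflexivity| | exact HF].
    specialize (DposS s). unfold D, P, N in *. field. lra. }
  assert (HFa : F a = 0).
  { unfold F, N. rewrite Ha. fold (w a). replace (w a + - w a) with 0 by ring. ring. }
  assert (HF0 : forall s, 0 <= F s).
  { intros s. unfold F. apply Rmult_le_pos. apply Rle_0_sqr. left. apply Rinv_0_lt_compat. auto. }
  destruct (Req_dec t a) as [e|ne]; [subst; auto|].
  destruct (Hgap t ltac:(lra)) as [g [Hg Hgs]].
  set (d := g * g / 100).
  assert (Hd : 0 < d) by (unfold d; apply Rdiv_lt_0_compat; nra).
  assert (Hm := mono F (fun _ => 0) a t d ltac:(lra) Hd ltac:(intros s Hs; split; [apply DF; lra| lra])).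
  assert (Hft : F t <= F a).
  { apply Hm; [|lra]. intros s Hs Hpre.
    destruct (HL s ltac:(lra)) as [Hc|Htl].
    - unfold F, N, D, P. apply (L_mult (at_left s)).
      + apply (L_mult (at_left s)); apply (L_plus (at_left s)); auto; apply (L_opp (at_left s)); auto.
      + apply (L_inv (at_left s)). apply Rgt_not_eq, (DposS s).
        apply (L_plus (at_left s)); apply (L_mult (at_left s)); apply (L_plus (at_left s));
          try apply (L_const (at_left s)); try apply (L_opp (at_left s)); auto;
          try apply (L_mult (at_left s)); auto.
    - exfalso. specialize (Hgs s Hs Htl). fold (w s) in Hgs.
      assert (Hg4 : 0 < g / 4) by lra.
      assert (E1 := Htl (ball tau (mkposreal _ Hg4)) (locally_ball _ _)).
      assert (E2 := Cw s (ball (w s) (mkposreal _ Hg4)) (locally_ball _ _)).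
      destruct (at_left_ex a s _ ltac:(lra) (filter_and (fun u => ball tau (mkposreal _ Hg4) (x u)) (fun u => ball (w s) (mkposreal _ Hg4) (w u)) E1 E2)) as [u [Hu [B1 B2]]].
      pose proof (proj1 (ballE _ _ _) B1) as B1'. pose proof (proj1 (ballE _ _ _) B2) as B2'.
      simpl in B1', B2'. apply Rabs_def2 in B1'. apply Rabs_def2 in B2'.
      specialize (Hpre u ltac:(lra)). rewrite HFa in Hpre.
      assert (HNu : g / 2 <= N u) by (unfold N; lra).
      assert (HDu : D u <= 18).
      { unfold D, P. fold (N u). specialize (wb u).
        assert (Hx : -2 <= x u <= 2) by lra.
        assert (-3 <= N u <= 3) by (unfold N; lra).
        assert (-3 <= 1 + - (x u * w u) <= 3) by nra.
        nra. }
      specialize (DposS u).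
      assert (F u * D u = N u * N u) by (unfold F; field; lra).
      assert (N u * N u >= g * g / 4) by nra.
      unfold d in Hpre. nra. }
  rewrite HFa in Hft. specialize (HF0 t).
  assert (Ft0 : F t = 0) by lra.
  specialize (DposS t).
  assert (N t * N t = 0) by (assert (F t * D t = N t * N t) by (unfold F; field; lra); nra).
  assert (N t = 0) by nra. unfold N in *. fold (w t). lra.
Qed.

Lemma ext_left (f g : R -> R) a s L : a < s -> (forall u, a < u < s -> f u = g u) ->
  filterlim g (at_left s) L -> filterlim f (at_left s) L.
Proof.
  intros Has E H. apply (filterlim_ext_loc g f); auto.
  assert (H2 : at_left s (fun u => u < s)).
  { unfold at_left, within. apply filter_forall. auto. }
  apply filter_imp with (2 := filter_and _ _ (at_left_gt a s Has) H2).
  intros u [h1 h2]. symmetry. apply E. lra.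
Qed.

Lemma lim_left_unique (f : R -> R) s L1 L2 :
  filterlim f (at_left s) (locally L1) -> filterlim f (at_left s) (locally L2) -> L1 = L2.
Proof.
  intros H1 H2. apply (filterlim_locally_unique (F := at_left s) f L1 L2); auto.
Qed.

Theorem lemma2
  (sA sS sC muS muC r tau alpha1 alpha2 : R)
  (x1 y1 x2 y2 : R -> R)
  (hsA : 0 <= sA) (hsS : 0 <= sS) (hsC : 0 < sC)
  (hmuS : 0 <= muS <= 1) (hmuC : 0 < muC) (hr : 0 < r)
  (htau : 0 < tau < 1)
  (ha1 : -1 < alpha1 < 1) (ha2 : -1 < alpha2 < 1)
  (h1 : sA * alpha1 - sS * muS > 0)
  (h2 : sA * alpha2 - sS * muS <= 0)
  (h3 : x1 0 = 0 /\ y1 0 = 0 /\ y2 0 = 0 /\ -1 < x2 0 < tau)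
  (hsys : two_indiv_traj sA sS sC muS muC r tau alpha1 alpha2 x1 y1 x2 y2) :
  let A1 := (sA * alpha1 - sS * muS) * sC * muC in
  let T := atanh tau / A1 in
  let A := (sA * alpha2 - sS * muS) * sC * muC in
  let B := - / r * ((sA * alpha2 - sS * muS) * sC + sS * sC * muC) in
  let C := - (sS * sC) / (2 * r) in
  let M := A * T + B * exp (- r * T) + C * exp (- 2 * r * T) - B - C in
  M > 0 ->
  let xs := - (1 - sqrt (1 - (tanh M) ^ 2)) / tanh M in
  exists m : nat, (1 <= m)%nat /\
    ((exists t, 0 < t <= (INR m + 1) * T /\ acts tau x2 t) \/
     ((forall t, 0 <= t <= INR m * T -> ~ acts tau x2 t) /\
      x2 (INR m * T) > xs)).
Proof.
  intros A1 T A B C M HM xs.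
  destruct h3 as [hx10 [hy10 [hy20 hx20]]].
  destruct hsys as [[H1D H1L] [H2D H2L]].
  assert (hA1 : 0 < A1) by (unfold A1; apply Rmult_lt_0_compat; [apply Rmult_lt_0_compat|]; lra).
  assert (hat : 0 < atanh tau) by (apply atanh_pos; lra).
  assert (hT : 0 < T) by (unfold T; apply Rdiv_lt_0_compat; auto).
  assert (hA1T : tanh (A1 * T) = tau).
  { unfold T. replace (A1 * (atanh tau / A1)) with (atanh tau) by (field; lra).
    apply th_atanh; lra. }
  destruct (classic (exists t, acts tau x2 t)) as [[t0 [Ht0 Hl0]]|NA].
  -
    destruct (INR_unbounded (t0 / T)) as [n Hn].
    exists (S n). split; [lia|]. left. exists t0. split; [|split; auto].
    split; auto. rewrite S_INR.
    assert (t0 < INR n * T).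
    { apply Rmult_lt_reg_r with (/ T). apply Rinv_0_lt_compat; auto.
      rewrite Rmult_assoc, Rinv_r by lra. rewrite Rmult_1_r. exact Hn. }
    pose proof (pos_INR n). nra.
  - assert (NA' : forall t, ~ acts tau x2 t) by (intros t Ht; apply NA; exists t; auto).
    clear NA.
    assert (L2 : forall s, 0 < s -> filterlim x2 (at_left s) (locally (x2 s)) /\
                                   filterlim y2 (at_left s) (locally (y2 s))).
    { intros s Hs. apply (proj2 (H2L s Hs)). apply NA'. }
    assert (Y2 : forall t, 0 <= t -> y2 t = 0).
    { intros t Ht.
      rewrite (YU y2 r 0 (t + 1) 0 ltac:(lra) ltac:(lra)
        ltac:(intros s Hs; apply RD_of_hrd; apply (proj2 (H2D s ltac:(lra))))
        ltac:(intros; apply L2; lra) hy20 t ltac:(lra)). ring. }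
    assert (PER : forall a v0, 0 <= a -> x1 a = 0 -> y1 a = v0 ->
      (forall t, a <= t < a + T -> y1 t = v0 * exp (- r * (t - a))) /\
      x1 (a + T) = 0 /\ y1 (a + T) = 1).
    { intros a v0 Ha Hx Hy.
      assert (XT : forall t, a <= t < a + T -> x1 t = tanh ((fun s => A1 * (s - a)) t)).
      { apply (XU x1 (fun _ => A1) (fun s => A1 * (s - a)) a (a + T) tau); try lra.
        - intros t. auto_derive; auto. ring.
        - intros t Ht. eapply RD_ext; [intros; reflexivity| |apply RD_of_hrd; apply (proj1 (H1D t ltac:(lra)))].
          rewrite (Y2 t ltac:(lra)). unfold xfield, A1. ring.
        - intros s Hs. destruct (classic (acts tau x1 s)) as [Hac|Hnac].
          + right. apply Hac.
          + left. apply (proj2 (H1L s ltac:(lra)) Hnac).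
        - intros c Hc. exists (tau - tanh (A1 * (c - a))). split.
          + rewrite <- hA1T at 1. assert (tanh (A1 * (c - a)) < tanh (A1 * T)); [|lra].
            apply th_mono. apply Rmult_lt_compat_l; lra.
          + intros s Hs _. destruct (Req_dec s c) as [e|ne]; [rewrite e; lra|].
            assert (tanh (A1 * (s - a)) < tanh (A1 * (c - a))); [|lra].
            apply th_mono. apply Rmult_lt_compat_l; lra.
        - rewrite Hx. replace (A1 * (a - a)) with 0 by ring. rewrite th_0; auto. }
      assert (LX : forall s, a < s <= a + T -> filterlim x1 (at_left s) (locally (tanh (A1 * (s - a))))).
      { intros s Hs. apply (ext_left x1 (fun s => tanh (A1 * (s - a))) a s); auto; [lra| |].
        - intros u Hu. apply XT. lra.
        - apply (cont_left (fun s => tanh (A1 * (s - a)))). intros z.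
          eexists. apply (is_derive_comp tanh (fun s => A1 * (s - a))). apply th_deriv.
          auto_derive; auto. }
      assert (NA1 : forall s, a < s < a + T -> ~ acts tau x1 s).
      { intros s Hs [_ Hl]. pose proof (lim_left_unique x1 s _ _ Hl (LX s ltac:(lra))) as E.
        assert (tanh (A1 * (s - a)) < tanh (A1 * T)); [|lra].
        apply th_mono. apply Rmult_lt_compat_l; lra. }
      assert (ACT : acts tau x1 (a + T)).
      { split; [lra|]. pose proof (LX (a + T) ltac:(lra)) as H.
        replace (A1 * (a + T - a)) with (A1 * T) in H by ring. rewrite hA1T in H. exact H. }
      destruct (proj1 (H1L (a + T) ltac:(lra)) ACT) as [E1 E2].
      split; [|split; auto].
      intros t Ht. apply (YU y1 r a (a + T) v0); auto; try lra.
      - intros s Hs. apply RD_of_hrd. apply (proj2 (H1D s ltac:(lra))).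
      - intros s Hs. apply (proj2 (H1L s ltac:(lra)) (NA1 s Hs)). }
    set (vv := fun n : nat => match n with O => 0 | S _ => 1 end).
    assert (PN : forall n, x1 (INR n * T) = 0 /\ y1 (INR n * T) = vv n).
    { induction n as [|n [IHx IHy]].
      - simpl. rewrite Rmult_0_l. auto.
      - pose proof (pos_INR n).
        destruct (PER (INR n * T) (vv n) ltac:(nra) IHx IHy) as [_ [E1 E2]].
        rewrite S_INR. replace ((INR n + 1) * T) with (INR n * T + T) by ring. auto. }
    assert (PY : forall n t, INR n * T <= t < INR n * T + T -> y1 t = vv n * exp (- r * (t - INR n * T))).
    { intros n. pose proof (pos_INR n). destruct (PN n) as [E1 E2].
      apply (proj1 (PER (INR n * T) (vv n) ltac:(nra) E1 E2)). }
    set (a2 := sA * alpha2 - sS * muS).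
    set (Kf := fun v s => A * s + (a2 * sC + sS * sC * muC) * v * (1 - exp (- r * s)) / r
                + sS * sC * v * v * (1 - exp (- r * s) * exp (- r * s)) / (2 * r)).
    assert (X2 : forall a v, 0 <= a -> (forall t, a <= t < a + T -> y1 t = v * exp (- r * (t - a))) ->
              -1 < x2 a < 1 -> x2 (a + T) = tanh (atanh (x2 a) + Kf v T)).
    { intros a v Ha Hy Hxa.
      set (W := fun s => atanh (x2 a) + Kf v (s - a)).
      set (k := fun s => (sA * alpha2 + sS * (v * exp (- r * (s - a)) - muS)) * (sC * (v * exp (- r * (s - a)) + muC))).
      assert (XT : forall t, a <= t < a + T -> x2 t = tanh (W t)).
      { apply (XU x2 k W a (a + T) tau); try lra.
        - intros t. unfold W, Kf, k, A, a2. auto_derive; auto. unfold Rminus. field. lra.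
        - intros t Ht. eapply RD_ext; [intros; reflexivity| |apply RD_of_hrd; apply (proj1 (H2D t ltac:(lra)))].
          rewrite (Hy t Ht). unfold xfield, k. ring.
        - intros s Hs. left. apply L2. lra.
        - intros c Hc. exists 1. split; [lra|]. intros s Hs Hl. exfalso. apply (NA' s). split; auto. lra.
        - assert (K0 : Kf v (a - a) = 0).
          { unfold Kf. replace (a - a) with 0 by ring. rewrite !Rmult_0_r, exp_0. field. lra. }
          unfold W. rewrite K0, Rplus_0_r, th_atanh by auto. reflexivity. }
      assert (LX : filterlim x2 (at_left (a + T)) (locally (tanh (W (a + T))))).
      { apply (ext_left x2 (fun s => tanh (W s)) a (a + T)); [lra| |].
        - intros u Hu. apply XT. lra.
        - apply (cont_left (fun s => tanh (W s))). intros z.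
          eexists. apply (is_derive_comp tanh W). apply th_deriv.
          unfold W, Kf. auto_derive; repeat split; lra. }
      pose proof (lim_left_unique x2 (a + T) _ _ (proj1 (L2 (a + T) ltac:(lra))) LX) as E.
      rewrite E. unfold W. f_equal. f_equal. f_equal. ring. }
    assert (G : forall n, -1 < x2 (INR n * T) < 1 ->
               x2 (INR n * T + T) = tanh (atanh (x2 (INR n * T)) + Kf (vv n) T)).
    { intros n Hb. pose proof (pos_INR n). apply X2; auto; nra. }
    assert (KF0 : Kf 0 T = A * T) by (unfold Kf; field; lra).
    assert (KF1 : Kf 1 T = M).
    { unfold Kf, M, B, C, a2. replace (- 2 * r * T) with (- r * T + - r * T) by ring.
      rewrite exp_plus. field. lra. }
    set (u1 := atanh (x2 0) + A * T).
    assert (ITER : forall n, x2 (INR (S n) * T) = tanh (u1 + INR n * M)).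
    { induction n as [|n IH].
      - replace (INR 1 * T) with (INR 0 * T + T) by (simpl; ring).
        rewrite G.
        + simpl vv. rewrite KF0. unfold u1. simpl INR. rewrite Rmult_0_l, Rmult_0_l, Rplus_0_r. reflexivity.
        + simpl INR. rewrite Rmult_0_l. lra.
      - replace (INR (S (S n)) * T) with (INR (S n) * T + T) by (rewrite (S_INR (S n)); ring).
        rewrite G.
        + simpl vv. rewrite KF1, IH, atanh_th. rewrite S_INR. f_equal. ring.
        + rewrite IH. apply th_bound. }
    assert (hM0 : 0 < tanh M) by (rewrite <- th_0; apply th_mono; lra).
    assert (hxs : xs < 0).
    { unfold xs. pose proof (th_bound M).
      assert (0 <= 1 - tanh M ^ 2) by nra.
      pose proof (sqrt_sqrt _ H0). pose proof (sqrt_pos (1 - tanh M ^ 2)).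
      assert (sqrt (1 - tanh M ^ 2) < 1) by nra.
      unfold Rdiv. assert (0 < / tanh M) by (apply Rinv_0_lt_compat; lra). nra. }
    destruct (INR_unbounded (- u1 / M)) as [n Hn].
    assert (Hn2 : - u1 < INR n * M).
    { apply Rmult_lt_reg_r with (/ M). apply Rinv_0_lt_compat; lra.
      rewrite Rmult_assoc, Rinv_r by lra. rewrite Rmult_1_r. exact Hn. }
    exists (S n). split; [lia|]. right. split.
    + intros t _. apply NA'.
    + rewrite ITER. apply Rlt_le_trans with 0; [lra|]. apply th_nonneg. lra.
Qed.
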